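(* Let $(A^{\mathbb N},\mathbb B_\Pi(A^{\mathbb N}),m,\sigma)$ be a Markov shift over $A=\{0,1,\dots,l\}$, let $\mathcal P=\{P_0,\dots,P_n\}\subset\mathbb B_\Pi(A^{\mathbb N})$ be a partition of $A^{\mathbb N}$, and let $O\in\mathbb B_\Pi(A^{\mathbb N})$ satisfy $m(O)=0$ and $\sigma^{-1}(O)=O$. Put $\widetilde{\mathcal P}=\{P\setminus O\mid P\in\mathcal P\}\cup\{O\}$. If $\widetilde{\mathcal P}$ satisfies: (i) each element of $\widetilde{\mathcal P}$ is either a subset of some cylinder $C_a$, $a\in A$, or is a $\sigma$-invariant set ($\sigma^{-1}(Q)=Q$) of measure $0$; and (ii) for any $Q_1,Q_2\in\widetilde{\mathcal P}$, either $Q_1\cap\sigma^{-1}(Q_2)=C_a\cap\sigma^{-1}(Q_2)$ for some $a\in A$, or $m(Q_1\cap\sigma^{-1}(Q_2))=0$; then $\mathcal P$ is generating and has the Markov property.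
   Context: Markov shift over $A=\{0,\dots,l\}$: given an $(l+1)\times(l+1)$ stochastic matrix $Q=(q_{ij})$ and a stationary probability vector $p$ of $Q$ with all $p_a>0$, it is $(A^{\mathbb N},\mathbb B_\Pi(A^{\mathbb N}),m,\sigma)$ with $A^{\mathbb N}$ the one-sided sequences $s=(s_0,s_1,\dots)$, $\mathbb B_\Pi$ generated by cylinders $C_{a_0\dots a_{n-1}}=\{s: s_i=a_i, i<n\}$, $(\sigma s)_j=s_{j+1}$, and $m(C_{a_0\dots a_{n-1}})=p_{a_0}q_{a_0a_1}\cdots q_{a_{n-2}a_{n-1}}$. A finite measurable partition $\mathcal G=\{G_0,\dots,G_r\}$ is generating if for every measurable $B$ there is $A'$ in the $\sigma$-algebra generated by the sets $\sigma^{-k}(G_i)$, $k\in\mathbb N_0$, with $m(A'\triangle B)=0$. A finite partition $\mathcal M=\{M_0,\dots,M_r\}$ has the Markov property if for all $n\in\mathbb N$ and $i_0,\dots,i_n$ with $m(M_{i_0}\cap\sigma^{-1}M_{i_1}\cap\dots\cap\sigma^{-(n-1)}M_{i_{n-1}})>0$, $\frac{m(M_{i_0}\cap\sigma^{-1}M_{i_1}\cap\dots\cap\sigma^{-n}M_{i_n})}{m(M_{i_0}\cap\dots\cap\sigma^{-(n-1)}M_{i_{n-1}})}=\frac{m(M_{i_{n-1}}\cap\sigma^{-1}M_{i_n})}{m(M_{i_{n-1}})}$. *)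

(* Defs.v *)
From Stdlib Require Import Reals List Arith.
Import ListNotations.
Open Scope R_scope.

Definition Alph (l : nat) := {a : nat | (a <= l)%nat}.
Definition Seq (l : nat) := nat -> Alph l.
Definition letter {l : nat} (s : Seq l) (i : nat) : nat := proj1_sig (s i).

Definition shift {l : nat} (s : Seq l) : Seq l := fun j => s (S j).
Definition shiftn {l : nat} (k : nat) (s : Seq l) : Seq l := fun j => s (k + j)%nat.

Definition set (X : Type) := X -> Prop.
Definition preim {l : nat} (k : nat) (B : set (Seq l)) : set (Seq l) :=
  fun s => B (shiftn k s).

Inductive sigma_gen {X : Type} (G : set X -> Prop) : set X -> Prop :=
| sg_gen : forall B, G B -> sigma_gen G B
| sg_full : sigma_gen G (fun _ => True)
| sg_compl : forall B, sigma_gen G B -> sigma_gen G (fun x => ~ B x)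
| sg_union : forall F : nat -> set X, (forall k, sigma_gen G (F k)) ->
    sigma_gen G (fun x => exists k, F k x).

Definition cyl {l : nat} (w : list nat) : set (Seq l) :=
  fun s => forall i, (i < length w)%nat -> letter s i = nth i w 0%nat.

Definition is_cylinder {l : nat} (B : set (Seq l)) : Prop :=
  exists w : list nat, B = cyl w.

Definition measurable {l : nat} : set (Seq l) -> Prop := sigma_gen (@is_cylinder l).

(* weight p_{a0} q_{a0 a1} ... q_{a_{n-2} a_{n-1}} of a nonempty word *)
Fixpoint qprod (q : nat -> nat -> R) (a : nat) (w : list nat) : R :=
  match w with
  | [] => 1
  | b :: w' => q a b * qprod q b w'
  end.

Definition cyl_weight (p : nat -> R) (q : nat -> nat -> R) (a : nat) (w : list nat) : R :=
  p a * qprod q a w.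

Definition stochastic (l : nat) (q : nat -> nat -> R) : Prop :=
  (forall i j, (i <= l)%nat -> (j <= l)%nat -> 0 <= q i j) /\
  (forall i, (i <= l)%nat -> sum_f_R0 (fun j => q i j) l = 1).

Definition stationary_pos (l : nat) (q : nat -> nat -> R) (p : nat -> R) : Prop :=
  (forall a, (a <= l)%nat -> 0 < p a) /\
  sum_f_R0 p l = 1 /\
  (forall j, (j <= l)%nat -> sum_f_R0 (fun i => p i * q i j) l = p j).

(* m is a (countably additive, nonnegative) measure on B_Pi(A^N) which on
   cylinders is given by the Markov formula.  By the pi-lambda theorem this
   determines m uniquely on B_Pi(A^N). *)
Definition markov_measure (l : nat) (q : nat -> nat -> R) (p : nat -> R)
    (m : set (Seq l) -> R) : Prop :=
  (forall B, measurable B -> 0 <= m B) /\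
  (forall F : nat -> set (Seq l), (forall k, measurable (F k)) ->
     (forall i j, i <> j -> forall s, F i s -> F j s -> False) ->
     infinite_sum (fun k => m (F k)) (m (fun s => exists k, F k s))) /\
  (forall (a : nat) (w : list nat), Forall (fun b => (b <= l)%nat) (a :: w) ->
     m (cyl (a :: w)) = cyl_weight p q a w).

Definition is_partition {l : nat} (N : nat) (P : nat -> set (Seq l)) : Prop :=
  (forall i, (i <= N)%nat -> measurable (P i)) /\
  (forall i j, (i <= N)%nat -> (j <= N)%nat -> i <> j ->
     forall s, P i s -> P j s -> False) /\
  (forall s, exists i, (i <= N)%nat /\ P i s).

Definition generating {l : nat} (m : set (Seq l) -> R) (N : nat)
    (P : nat -> set (Seq l)) : Prop :=
  forall B, measurable B ->
    exists A', sigma_gen (fun C => exists k i, (i <= N)%nat /\ C = preim k (P i)) A' /\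
      m (fun s => ~ (A' s <-> B s)) = 0.

Definition pcyl {l : nat} (M : nat -> set (Seq l)) (idx : nat -> nat) (n : nat) : set (Seq l) :=
  fun s => forall j, (j < n)%nat -> M (idx j) (shiftn j s).

Definition markov_property {l : nat} (m : set (Seq l) -> R) (N : nat)
    (M : nat -> set (Seq l)) : Prop :=
  forall (n : nat) (idx : nat -> nat), (1 <= n)%nat ->
    (forall j, (j <= n)%nat -> (idx j <= N)%nat) ->
    0 < m (pcyl M idx n) ->
    m (pcyl M idx (S n)) / m (pcyl M idx n) =
    m (fun s => M (idx (n - 1)%nat) s /\ M (idx n) (shift s)) / m (M (idx (n - 1)%nat)).

Definition invariant {l : nat} (B : set (Seq l)) : Prop :=
  forall s, B (shift s) <-> B s.

(* the modified partition P~ indexed by 0..N+1: P_i \ O for i <= N, and O at N+1 *)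
Definition Ptilde {l : nat} (N : nat) (P : nat -> set (Seq l)) (O : set (Seq l)) :
    nat -> set (Seq l) :=
  fun k s => if Nat.leb k N then P k s /\ ~ O s else O s.

(* Main.v *)
Require Import Defs.
From Stdlib Require Import Reals List Arith Lia Lra.
From Stdlib Require Import Classical FunctionalExtensionality PropExtensionality ClassicalEpsilon.
Import ListNotations.
Open Scope R_scope.

Lemma set_ext {X : Type} (A B : set X) : (forall x, A x <-> B x) -> A = B.
Proof. intro H. apply functional_extensionality; intro x. apply propositional_extensionality; auto. Qed.

Definition disj {X : Type} (F : nat -> set X) : Prop :=
  forall i j, i <> j -> forall x, F i x -> F j x -> False.

Lemma sg_empty {X} (G : set X -> Prop) : sigma_gen G (fun _ => False).
Proof.
  replace (fun _ : X => False) with (fun x : X => ~ (fun _ : X => True) x).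
  - apply sg_compl, sg_full.
  - apply set_ext; intros x; simpl; tauto.
Qed.

Lemma sg_union2 {X} (G : set X -> Prop) A B :
  sigma_gen G A -> sigma_gen G B -> sigma_gen G (fun x => A x \/ B x).
Proof.
  intros HA HB.
  replace (fun x => A x \/ B x) with
    (fun x => exists k, (fun k => match k with 0%nat => A | _ => B end) k x).
  - apply sg_union. intros [|k]; auto.
  - apply set_ext; intros x; split.
    + intros [[|k] H]; auto.
    + intros [H|H]; [exists 0%nat | exists 1%nat]; auto.
Qed.

Lemma sg_inter {X} (G : set X -> Prop) A B :
  sigma_gen G A -> sigma_gen G B -> sigma_gen G (fun x => A x /\ B x).
Proof.
  intros HA HB.
  replace (fun x => A x /\ B x) with (fun x => ~ (fun y => ~ A y \/ ~ B y) x).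
  - apply sg_compl, sg_union2; apply sg_compl; auto.
  - apply set_ext; intros x; simpl; tauto.
Qed.

Lemma sg_ext {X} (G : set X -> Prop) A B :
  sigma_gen G A -> (forall x, A x <-> B x) -> sigma_gen G B.
Proof. intros H E. rewrite <- (set_ext _ _ E). auto. Qed.

Lemma union_disj {X} (F : nat -> set X) :
  (fun x => exists k, F k x) = (fun x => exists k, F k x /\ forall j, (j < k)%nat -> ~ F j x).
Proof.
  apply set_ext; intros x; split.
  - intros [k Hk]. revert Hk. induction k as [k IH] using lt_wf_ind. intros Hk.
    destruct (classic (forall j, (j < k)%nat -> ~ F j x)) as [H|H].
    + exists k; auto.
    + apply not_all_ex_not in H. destruct H as [j Hj].
      apply imply_to_and in Hj. destruct Hj as [Hj1 Hj2]. apply NNPP in Hj2.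
      apply (IH j); auto.
  - intros [k [Hk _]]; eauto.
Qed.

Lemma disj_disj {X} (F : nat -> set X) :
  disj (fun k x => F k x /\ forall j, (j < k)%nat -> ~ F j x).
Proof.
  intros i j Hij x [Hi Hi'] [Hj Hj'].
  destruct (Nat.lt_gt_cases i j) as [[H|H] _]; auto.
  - apply (Hj' i); auto.
  - apply (Hi' j); auto.
Qed.

Definition prefix_free {X} (F : nat -> set X) (k : nat) : set X :=
  fun x => forall j, (j < k)%nat -> ~ F j x.

Lemma prefix_free_S {X} (F : nat -> set X) k :
  prefix_free F (S k) = (fun x => prefix_free F k x /\ ~ F k x).
Proof.
  apply set_ext; intro x; unfold prefix_free; split.
  - intros H; split; auto.
  - intros [H1 H2] j Hj. destruct (Nat.eq_dec j k); [subst; auto|]. apply H1; lia.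
Qed.

Lemma prefix_free_0 {X} (F : nat -> set X) : prefix_free F 0 = (fun _ => True).
Proof. apply set_ext; intro x; unfold prefix_free; split; auto. intros _ j Hj; lia. Qed.

Lemma sg_prefix_free {X} (G : set X -> Prop) F :
  (forall k, sigma_gen G (F k)) -> forall k, sigma_gen G (prefix_free F k).
Proof.
  intros H k; induction k.
  - rewrite prefix_free_0; apply sg_full.
  - rewrite prefix_free_S. apply sg_inter; auto. apply sg_compl; auto.
Qed.

Inductive dyn {X : Type} (G : set X -> Prop) : set X -> Prop :=
| dy_gen : forall A, G A -> dyn G A
| dy_full : dyn G (fun _ => True)
| dy_compl : forall A, dyn G A -> dyn G (fun x => ~ A x)
| dy_dunion : forall F : nat -> set X, (forall k, dyn G (F k)) -> disj F ->
    dyn G (fun x => exists k, F k x).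

Lemma dyn_ext {X} (G : set X -> Prop) A B : dyn G A -> (forall x, A x <-> B x) -> dyn G B.
Proof. intros H E. rewrite <- (set_ext _ _ E). auto. Qed.

Lemma dyn_union2 {X} (G : set X -> Prop) A B :
  dyn G A -> dyn G B -> (forall x, A x -> B x -> False) -> dyn G (fun x => A x \/ B x).
Proof.
  intros HA HB D.
  apply dyn_ext with (fun x => exists k,
     (fun k => match k with 0%nat => A | 1%nat => B | _ => fun _ => False end) k x).
  - apply dy_dunion.
    + intros [|[|k]]; auto. apply dyn_ext with (fun x => ~ (fun _ : X => True) x).
      apply dy_compl, dy_full. intros; tauto.
    + intros [|[|i]] [|[|j]] Hij x; simpl; try tauto; try (exfalso; lia); eauto.
  - intros x; split.
    + intros [[|[|k]] H]; auto. destruct H.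
    + intros [H|H]; [exists 0%nat | exists 1%nat]; auto.
Qed.

Lemma dyn_good {X} (G : set X -> Prop) (B : set X) :
  dyn G B -> (forall A, G A -> dyn G (fun x => A x /\ B x)) ->
  forall C, dyn G C -> dyn G (fun x => C x /\ B x).
Proof.
  intros HB HG C HC. induction HC.
  - auto.
  - apply dyn_ext with B; auto. intros; tauto.
  - apply dyn_ext with (fun x => ~ (fun y => ~ B y \/ (A y /\ B y)) x).
    + apply dy_compl, dyn_union2; auto. apply dy_compl; auto. tauto.
    + intros x; simpl; tauto.
  - apply dyn_ext with (fun x => exists k, (fun k x => F k x /\ B x) k x).
    + apply dy_dunion; auto. intros i j Hij x [Ha _] [Hb _]; eapply H1; eauto.
    + intros x; split. intros [k [Ha Hb]]; split; eauto. intros [[k Ha] Hb]; eauto.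
Qed.

Lemma dyn_inter {X} (G : set X -> Prop) :
  (forall A B, G A -> G B -> G (fun x => A x /\ B x)) ->
  forall A B, dyn G A -> dyn G B -> dyn G (fun x => A x /\ B x).
Proof.
  intros HG A B HA HB.
  assert (S1 : forall A0, G A0 -> forall C, dyn G C -> dyn G (fun x => C x /\ A0 x)).
  { intros A0 HA0. apply dyn_good. apply dy_gen; auto. intros; apply dy_gen; auto. }
  apply dyn_good; auto. intros A0 HA0.
  apply dyn_ext with (fun x => B x /\ A0 x). apply S1; auto. intros; tauto.
Qed.

Lemma pi_lambda {X : Type} (G D : set X -> Prop) :
  (forall A B, G A -> G B -> G (fun x => A x /\ B x)) ->
  (forall A, G A -> D A) ->
  D (fun _ => True) ->
  (forall A, D A -> D (fun x => ~ A x)) ->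
  (forall F : nat -> set X, (forall k, D (F k)) -> disj F -> D (fun x => exists k, F k x)) ->
  forall A, sigma_gen G A -> D A.
Proof.
  intros HG H1 H2 H3 H4.
  assert (HD : forall A, dyn G A -> D A).
  { intros A HA; induction HA; auto. }
  assert (Hpf : forall F, (forall k, dyn G (F k)) -> forall k, dyn G (prefix_free F k)).
  { intros F HF k; induction k.
    - rewrite prefix_free_0; apply dy_full.
    - rewrite prefix_free_S. apply dyn_inter; auto. apply dy_compl; auto. }
  intros A HA. apply HD. induction HA.
  - apply dy_gen; auto.
  - apply dy_full.
  - apply dy_compl; auto.
  - rewrite union_disj. apply dy_dunion.
    + intros k. apply (dyn_inter G HG (F k) (prefix_free F k)); auto.
    + apply disj_disj.
Qed.

Definition measure_ok (l : nat) (m : set (Seq l) -> R) : Prop :=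
  (forall B, measurable B -> 0 <= m B) /\
  (forall F : nat -> set (Seq l), (forall k, measurable (F k)) ->
     (forall i j, i <> j -> forall s, F i s -> F j s -> False) ->
     infinite_sum (fun k => m (F k)) (m (fun s => exists k, F k s))).

Lemma isum_eventually (f : nat -> R) L N0 :
  (forall n, (n >= N0)%nat -> sum_f_R0 f n = L) -> infinite_sum f L.
Proof.
  intros H eps Heps. exists N0. intros n Hn. rewrite H; auto.
  unfold Rdist. replace (L - L) with 0 by ring. rewrite Rabs_R0. lra.
Qed.

Lemma sum_f_R0_scal (f : nat -> R) c n : sum_f_R0 (fun k => f k * c) n = sum_f_R0 f n * c.
Proof. induction n; simpl; [ring | rewrite IHn; ring]. Qed.

Lemma isum_scal (f : nat -> R) L c : infinite_sum f L -> infinite_sum (fun k => f k * c) (L * c).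
Proof.
  intros H eps Heps.
  destruct (Req_dec c 0) as [Hc|Hc].
  - exists 0%nat. intros n _. rewrite sum_f_R0_scal, Hc. unfold Rdist.
    replace (sum_f_R0 f n * 0 - L * 0) with 0 by ring. rewrite Rabs_R0; lra.
  - assert (Hc' : 0 < Rabs c) by (apply Rabs_pos_lt; auto).
    destruct (H (eps / Rabs c)) as [N0 HN]. apply Rdiv_lt_0_compat; auto.
    exists N0. intros n Hn. rewrite sum_f_R0_scal. unfold Rdist.
    replace (sum_f_R0 f n * c - L * c) with ((sum_f_R0 f n - L) * c) by ring.
    rewrite Rabs_mult. specialize (HN n Hn). unfold Rdist in HN.
    apply (Rmult_lt_compat_r (Rabs c)) in HN; auto.
    replace (eps / Rabs c * Rabs c) with eps in HN by (field; lra). auto.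
Qed.


Lemma m_empty l m : measure_ok l m -> m (fun _ => False) = 0.
Proof.
  intros [Hpos Hadd].
  set (c := m (fun _ : Seq l => False)).
  assert (Hs : infinite_sum (fun _ => c) c).
  { assert (E : (fun s : Seq l => exists k : nat, (fun _ : nat => fun _ : Seq l => False) k s)
              = (fun _ => False)).
    { apply set_ext; intros s; split; [intros [_ []] | intros []]. }
    unfold c at 2. rewrite <- E. apply (Hadd (fun _ _ => False)).
    - intros; apply sg_empty.
    - intros; auto. }
  assert (Hc : 0 <= c) by (apply Hpos, sg_empty).
  destruct (Req_dec c 0) as [|Hne]; auto. exfalso.
  destruct (Hs c) as [N0 HN]. lra.
  specialize (HN (S N0) ltac:(lia)). rewrite sum_cte in HN. unfold Rdist in HN.
  rewrite (S_INR (S N0)) in HN. rewrite S_INR in HN. pose proof (pos_INR N0).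
  rewrite Rabs_right in HN; nra.
Qed.

Lemma m_add2 l m : measure_ok l m -> forall A B : set (Seq l),
  measurable A -> measurable B -> (forall s, A s -> B s -> False) ->
  m (fun s => A s \/ B s) = m A + m B.
Proof.
  intros Hm A B HA HB D. pose proof (m_empty l m Hm) as He. destruct Hm as [Hpos Hadd].
  set (F := fun k => match k with 0%nat => A | 1%nat => B | _ => fun _ : Seq l => False end).
  assert (E : (fun s => A s \/ B s) = (fun s => exists k, F k s)).
  { apply set_ext; intros s; split.
    - intros [H|H]; [exists 0%nat | exists 1%nat]; auto.
    - intros [[|[|k]] H]; auto. destruct H. }
  rewrite E. symmetry. apply (uniqueness_sum (fun k => m (F k))).
  - apply isum_eventually with 1%nat. intros n Hn.
    induction n. lia. destruct n. simpl. ring.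
    simpl. simpl in IHn. rewrite IHn by lia. unfold F. rewrite He. ring.
  - apply Hadd.
    + intros [|[|k]]; auto. apply sg_empty.
    + intros [|[|i]] [|[|j]] Hij s; simpl; try tauto; try (exfalso; lia); eauto.
Qed.

Lemma m_split l m : measure_ok l m -> forall A B : set (Seq l),
  measurable A -> measurable B ->
  m A = m (fun s => A s /\ B s) + m (fun s => A s /\ ~ B s).
Proof.
  intros Hm A B HA HB. rewrite <- m_add2; auto.
  - f_equal. apply set_ext; intros s; tauto.
  - apply sg_inter; auto.
  - apply sg_inter; auto. apply sg_compl; auto.
  - intros s; tauto.
Qed.

Lemma m_mono l m : measure_ok l m -> forall A B : set (Seq l),
  measurable A -> measurable B -> (forall s, A s -> B s) -> m A <= m B.
Proof.
  intros Hm A B HA HB Hs. rewrite (m_split l m Hm B A); auto.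
  replace (fun s => B s /\ A s) with A by (apply set_ext; intros s; split; [intros; split|intros [? ?]]; auto).
  pose proof (proj1 Hm (fun s => B s /\ ~ A s)). assert (0 <= m (fun s => B s /\ ~ A s)).
  apply H; apply sg_inter; auto; apply sg_compl; auto. lra.
Qed.

Lemma m_null_union l m : measure_ok l m -> forall F : nat -> set (Seq l),
  (forall k, measurable (F k)) -> (forall k, m (F k) = 0) -> m (fun s => exists k, F k s) = 0.
Proof.
  intros Hm F HF H0. rewrite union_disj.
  apply (uniqueness_sum (fun k => m (fun x => F k x /\ forall j, (j < k)%nat -> ~ F j x))).
  - apply (proj2 Hm).
    + intros k. apply sg_inter; [apply HF | apply (sg_prefix_free _ F HF k)].
    + apply disj_disj.
  - apply isum_eventually with 0%nat. intros n _.
    assert (Z : forall k, m (fun x => F k x /\ forall j, (j < k)%nat -> ~ F j x) = 0).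
    { intros k. apply Rle_antisym.
      - rewrite <- (H0 k). apply m_mono; auto.
        + apply sg_inter; [apply HF | apply (sg_prefix_free _ F HF k)].
        + intros s [? ?]; auto.
      - apply (proj1 Hm). apply sg_inter; [apply HF | apply (sg_prefix_free _ F HF k)]. }
    induction n; simpl; rewrite Z; [ring|]. rewrite IHn; ring.
Qed.

Lemma m_null_sub l m : measure_ok l m -> forall A B : set (Seq l),
  measurable A -> measurable B -> (forall s, A s -> B s) -> m B = 0 -> m A = 0.
Proof.
  intros Hm A B HA HB Hs H0. apply Rle_antisym.
  rewrite <- H0; apply m_mono; auto. apply (proj1 Hm); auto.
Qed.

Lemma m_null_ext l m : measure_ok l m -> forall A : set (Seq l), (forall s, ~ A s) -> m A = 0.
Proof.
  intros Hm A H. replace A with (fun _ : Seq l => False). apply m_empty; auto.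
  apply set_ext; intros s; split; [intros []|apply H].
Qed.

Lemma m_agree l m : measure_ok l m -> forall O A B : set (Seq l),
  measurable O -> m O = 0 -> measurable A -> measurable B ->
  (forall s, ~ O s -> (A s <-> B s)) -> m A = m B.
Proof.
  intros Hm O A B HO HO0 HA HB H.
  rewrite (m_split l m Hm A O), (m_split l m Hm B O); auto.
  rewrite (m_null_sub l m Hm (fun s => A s /\ O s) O), (m_null_sub l m Hm (fun s => B s /\ O s) O);
   auto; try (apply sg_inter; auto); try (intros s [? ?]; auto).
  f_equal. f_equal. apply set_ext; intros s; split; intros [H1 H2]; split; auto; apply H; auto.
Qed.

Lemma letter_le {l} (s : Seq l) i : (letter s i <= l)%nat.
Proof. unfold letter. destruct (s i); simpl; auto. Qed.

Lemma cyl1 {l} (a : nat) (s : Seq l) : cyl [a] s <-> letter s 0 = a.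
Proof.
  unfold cyl; simpl; split.
  - intros H; apply (H 0%nat); lia.
  - intros H i Hi. destruct i; [auto|lia].
Qed.

Lemma preim1_cyl {l} (w : list nat) :
  preim 1 (@cyl l w) = (fun s => exists c, cyl (c :: w) s).
Proof.
  apply set_ext; intros s; split.
  - intros H. exists (letter s 0). intros [|i] Hi; simpl; auto.
    apply (H i). simpl in Hi; lia.
  - intros [c H] i Hi. apply (H (S i)). simpl; lia.
Qed.

Lemma preim1_meas {l} (B : set (Seq l)) : measurable B -> measurable (preim 1 B).
Proof.
  intros H; induction H.
  - destruct H as [w ->]. rewrite preim1_cyl.
    apply (sg_union _ (fun c => cyl (c :: w))). intros c. apply sg_gen. exists (c :: w); auto.
  - apply sg_full.
  - apply sg_compl; auto.
  - apply (sg_union _ (fun k => preim 1 (F k))); auto.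
Qed.

Lemma preim_meas {l} (k : nat) (B : set (Seq l)) : measurable B -> measurable (preim k B).
Proof.
  intros H; induction k.
  - exact H.
  - change (measurable (preim 1 (preim k B))). apply preim1_meas; auto.
Qed.

Lemma shift_shiftn {l} (j : nat) (s : Seq l) : shift (shiftn j s) = shiftn (S j) s.
Proof.
  apply functional_extensionality; intros x. unfold shift, shiftn. f_equal. lia.
Qed.

Lemma inv_shiftn {l} (Z : set (Seq l)) : invariant Z -> forall j s, Z (shiftn j s) <-> Z s.
Proof.
  intros H j; induction j; intros s.
  - tauto.
  - change (Z (shiftn j (shift s)) <-> Z s). rewrite IHj. apply H.
Qed.

Lemma cyl_bad {l} (w : list nat) : ~ Forall (fun x => (x <= l)%nat) w -> forall s : Seq l, ~ cyl w s.
Proof.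
  intros H s Hs. apply H. apply Forall_forall. intros x Hx.
  destruct (In_nth w x 0%nat Hx) as [i [Hi Hix]]. rewrite <- Hix, <- (Hs i Hi). apply letter_le.
Qed.

Lemma cyl_inter {l} (A B : set (Seq l)) : is_cylinder A -> is_cylinder B ->
  is_cylinder (fun s => A s /\ B s).
Proof.
  assert (Hw : forall w1 w2 : list nat, (length w1 <= length w2)%nat ->
     is_cylinder (fun s : Seq l => cyl w1 s /\ cyl w2 s)).
  { intros w1 w2 Hle.
    destruct (classic (forall i, (i < length w1)%nat -> nth i w1 0%nat = nth i w2 0%nat)) as [H|H].
    - exists w2. apply set_ext; intros s; split; [tauto|]. intros Hs; split; auto.
      intros i Hi. rewrite H by auto. apply Hs; lia.
    - apply not_all_ex_not in H. destruct H as [i Hi]. apply imply_to_and in Hi.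
      destruct Hi as [Hi1 Hi2]. exists [S l]. apply set_ext; intros s; split.
      + intros [H1 H2]. exfalso. apply Hi2. assert (Hi3 : (i < length w2)%nat) by lia.
        rewrite <- (H1 i Hi1), <- (H2 i Hi3). auto.
      + intros H. exfalso. apply (proj1 (cyl1 _ _)) in H. pose proof (letter_le s 0%nat). lia. }
  intros [w1 ->] [w2 ->].
  destruct (Nat.le_ge_cases (length w1) (length w2)) as [H|H]; auto.
  replace (fun s : Seq l => cyl w1 s /\ cyl w2 s) with (fun s : Seq l => cyl w2 s /\ cyl w1 s).
  apply Hw; auto. apply set_ext; intros; tauto.
Qed.

Fixpoint lst (a : nat) (w : list nat) : nat :=
  match w with [] => a | x :: w' => lst x w' end.

Lemma qprod_app q a w v : qprod q a (w ++ v) = qprod q a w * qprod q (lst a w) v.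
Proof.
  revert a; induction w as [|x w IH]; intros a; simpl; [ring|]. rewrite IH; ring.
Qed.

Lemma nth_lst a w : nth (length w) (a :: w) 0%nat = lst a w.
Proof. revert a; induction w as [|x w IH]; intros a; simpl; auto. apply IH. Qed.

Lemma cyl_app {l} (u v : list nat) k b (s : Seq l) :
  length u = S k -> nth k u 0%nat = b ->
  (cyl u s /\ cyl (b :: v) (shiftn k s)) <-> cyl (u ++ v) s.
Proof.
  intros Hl Hb; split.
  - intros [H1 H2] i Hi. rewrite length_app in Hi.
    destruct (Nat.lt_ge_cases i (length u)) as [Hu|Hu].
    + rewrite app_nth1 by auto. apply H1; auto.
    + rewrite app_nth2 by auto. specialize (H2 (S (i - length u)) ltac:(simpl; lia)).
      simpl in H2. unfold letter, shiftn in H2 |- *.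
      replace (k + S (i - length u))%nat with i in H2 by lia. auto.
  - intros H. split.
    + intros i Hi. rewrite <- (app_nth1 u v 0%nat Hi). apply H. rewrite length_app; lia.
    + intros [|i] Hi; unfold letter, shiftn; simpl.
      * rewrite Nat.add_0_r. rewrite <- Hb. rewrite <- (app_nth1 u v 0%nat) by lia.
        apply H. rewrite length_app; lia.
      * simpl in Hi. specialize (H (k + S i)%nat ltac:(rewrite length_app; lia)).
        rewrite app_nth2 in H by lia. replace (k + S i - length u)%nat with i in H by lia. auto.
Qed.

Definition weight_ok (l : nat) (q : nat -> nat -> R) (p : nat -> R) (m : set (Seq l) -> R) :=
  forall (a : nat) (w : list nat), Forall (fun b => (b <= l)%nat) (a :: w) ->
     m (cyl (a :: w)) = cyl_weight p q a w.

Lemma KEY l q p m : measure_ok l m -> weight_ok l q p m ->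
  forall u k b, Forall (fun x => (x <= l)%nat) u -> length u = S k -> nth k u 0%nat = b ->
  forall B, measurable B ->
  m (fun s => cyl u s /\ B (shiftn k s)) * p b = m (cyl u) * m (fun s => cyl [b] s /\ B s).
Proof.
  intros Hm Hw u k b Hu Hl Hb.
  assert (Hb_le : (b <= l)%nat).
  { rewrite Forall_forall in Hu. apply Hu. rewrite <- Hb. apply nth_In. lia. }
  assert (Hmb : m (cyl [b]) = p b).
  { rewrite Hw. unfold cyl_weight; simpl; ring. constructor; auto. }
  assert (Hcu : measurable (@cyl l u)) by (apply sg_gen; exists u; auto).
  assert (Hcb : measurable (@cyl l [b])) by (apply sg_gen; exists [b]; auto).
  apply (pi_lambda is_cylinder (fun B => measurable B /\
     m (fun s => cyl u s /\ B (shiftn k s)) * p b = m (cyl u) * m (fun s => cyl [b] s /\ B s))).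
  - apply cyl_inter.
  - intros A HA. split. apply sg_gen; auto. destruct HA as [[|c v] ->].
    + replace (fun s : Seq l => cyl u s /\ cyl [] (shiftn k s)) with (@cyl l u).
      replace (fun s : Seq l => cyl [b] s /\ cyl [] s) with (@cyl l [b]).
      rewrite Hmb; ring.
      apply set_ext; intros s; split; [intros H; split; auto|tauto]; intros i Hi; simpl in Hi; lia.
      apply set_ext; intros s; split; [intros H; split; auto|tauto]; intros i Hi; simpl in Hi; lia.
    + destruct (classic (c = b /\ Forall (fun x => (x <= l)%nat) v)) as [[-> Hv]|Hn].
      * replace (fun s : Seq l => cyl u s /\ cyl (b :: v) (shiftn k s)) with (@cyl l (u ++ v))
          by (apply set_ext; intros s; symmetry; apply cyl_app; auto).
        replace (fun s : Seq l => cyl [b] s /\ cyl (b :: v) s) with (@cyl l (b :: v)).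
        2:{ apply set_ext; intros s; split; [intros H; split; auto|tauto].
            apply cyl1. apply (H 0%nat). simpl; lia. }
        destruct u as [|a w]; [discriminate|].
        assert (Hu' : Forall (fun x => (x <= l)%nat) (a :: w ++ v)).
        { inversion Hu; subst. constructor; auto. apply Forall_app; auto. }
        change ((a :: w) ++ v) with (a :: (w ++ v)).
        rewrite (Hw a (w ++ v) Hu'), (Hw a w Hu), (Hw b v) by (constructor; auto).
        unfold cyl_weight. rewrite qprod_app.
        simpl in Hl. injection Hl as Hl. subst k. rewrite nth_lst in Hb. subst b. ring.
      * rewrite (m_null_ext l m Hm (fun s => cyl u s /\ cyl (c :: v) (shiftn k s))).
        rewrite (m_null_ext l m Hm (fun s => cyl [b] s /\ cyl (c :: v) s)). ring.
        -- intros s [H1 H2]. apply Hn. split.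
           ++ apply (proj1 (cyl1 _ _)) in H1. rewrite <- H1. symmetry. apply (H2 0%nat); simpl; lia.
           ++ apply Forall_forall. intros x Hx.
              destruct (In_nth v x 0%nat Hx) as [i [Hi Hix]]. rewrite <- Hix.
              assert (E := H2 (S i) ltac:(simpl; lia)). simpl in E. rewrite <- E.
              apply letter_le.
        -- intros s [H1 H2]. apply Hn. split.
           ++ rewrite <- Hb. rewrite <- (H1 k) by lia. symmetry.
              specialize (H2 0%nat ltac:(simpl; lia)). unfold letter, shiftn in H2 |- *.
              rewrite Nat.add_0_r in H2. auto.
           ++ apply Forall_forall. intros x Hx.
              destruct (In_nth v x 0%nat Hx) as [i [Hi Hix]]. rewrite <- Hix.
              assert (E := H2 (S i) ltac:(simpl; lia)). simpl in E. rewrite <- E.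
              apply letter_le.
  - split. apply sg_full.
    replace (fun s : Seq l => cyl u s /\ True) with (@cyl l u) by (apply set_ext; tauto).
    replace (fun s : Seq l => cyl [b] s /\ True) with (@cyl l [b]) by (apply set_ext; tauto).
    rewrite Hmb; ring.
  - intros A [HA E]. split. apply sg_compl; auto.
    pose proof (m_split l m Hm (cyl u) (preim k A) Hcu (preim_meas k A HA)) as S1.
    pose proof (m_split l m Hm (cyl [b]) A Hcb HA) as S2.
    unfold preim in S1. rewrite Hmb in S2. nra.
  - intros F HF Hd. split.
    + apply (sg_union _ F). intros j; apply HF.
    + assert (I1 : infinite_sum (fun j => m (fun s => cyl u s /\ F j (shiftn k s)))
                    (m (fun s => cyl u s /\ (exists j, F j (shiftn k s))))).
      { replace (fun s => cyl u s /\ (exists j, F j (shiftn k s)))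
          with (fun s => exists j, (fun j s => cyl u s /\ F j (shiftn k s)) j s).
        apply (proj2 Hm).
        - intros j. apply sg_inter; auto. apply preim_meas. apply HF.
        - intros i j Hij s [_ Ha] [_ Hb']. eapply Hd; eauto.
        - apply set_ext; intros s; split. intros [j [? ?]]; eauto. intros [? [j ?]]; eauto. }
      assert (I2 : infinite_sum (fun j => m (fun s => cyl [b] s /\ F j s))
                    (m (fun s => cyl [b] s /\ (exists j, F j s)))).
      { replace (fun s => cyl [b] s /\ (exists j, F j s))
          with (fun s => exists j, (fun j s => cyl [b] s /\ F j s) j s).
        apply (proj2 Hm).
        - intros j. apply sg_inter; auto. apply HF.
        - intros i j Hij s [_ Ha] [_ Hb']. eapply Hd; eauto.
        - apply set_ext; intros s; split. intros [j [? ?]]; eauto. intros [? [j ?]]; eauto. }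
      apply isum_scal with (c := p b) in I1.
      apply isum_scal with (c := m (cyl u)) in I2.
      rewrite (Rmult_comm (m (cyl u))). apply (uniqueness_sum _ _ _ I1).
      replace (fun j => m (fun s => cyl u s /\ F j (shiftn k s)) * p b) with
              (fun j => m (fun s => cyl [b] s /\ F j s) * m (cyl u)); auto.
      apply functional_extensionality; intros j. rewrite (proj2 (HF j)). ring.
Qed.

Lemma Ptilde_meas {l} N (P : nat -> set (Seq l)) O :
  is_partition N P -> measurable O -> forall k, measurable (Ptilde N P O k).
Proof.
  intros [HP _] HO k. unfold Ptilde. destruct (Nat.leb k N) eqn:E.
  - apply sg_inter. apply HP, Nat.leb_le; auto. apply sg_compl; auto.
  - exact HO.
Qed.

Lemma Ptilde_le {l} N (P : nat -> set (Seq l)) O k s :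
  (k <= N)%nat -> (Ptilde N P O k s <-> P k s /\ ~ O s).
Proof. intros H. unfold Ptilde. rewrite (proj2 (Nat.leb_le k N) H). tauto. Qed.

Definition GenP {l} N (P : nat -> set (Seq l)) : set (Seq l) -> Prop :=
  fun C => exists k i, (i <= N)%nat /\ C = preim k (P i).

Definition symd {X} (A B : set X) : set X := fun s => ~ (A s <-> B s).

Lemma symd_meas {l} (A B : set (Seq l)) : measurable A -> measurable B -> measurable (symd A B).
Proof.
  intros HA HB. apply sg_ext with (fun s => (A s /\ ~ B s) \/ (~ A s /\ B s)).
  apply sg_union2; apply sg_inter; auto; apply sg_compl; auto.
  intros s; unfold symd; tauto.
Qed.

Lemma Gen_meas {l} N (P : nat -> set (Seq l)) :
  is_partition N P -> forall A, sigma_gen (GenP N P) A -> measurable A.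
Proof.
  intros HP A H; induction H.
  - destruct H as [k [i [Hi ->]]]. apply preim_meas, (proj1 HP); auto.
  - apply sg_full.
  - apply sg_compl; auto.
  - apply sg_union; auto.
Qed.

Definition Approx {l} (m : set (Seq l) -> R) N (P : nat -> set (Seq l)) (B : set (Seq l)) :=
  exists A', sigma_gen (GenP N P) A' /\ m (symd A' B) = 0.

Lemma approx_full {l} m N (P : nat -> set (Seq l)) : measure_ok l m -> Approx m N P (fun _ => True).
Proof.
  intros Hm. exists (fun _ => True). split. apply sg_full.
  apply m_null_ext; auto. intros s H; apply H; tauto.
Qed.

Lemma approx_compl {l} m N (P : nat -> set (Seq l)) B :
  Approx m N P B -> Approx m N P (fun s => ~ B s).
Proof.
  intros [A' [HA H0]]. exists (fun s => ~ A' s). split. apply sg_compl; auto.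
  rewrite <- H0. f_equal. apply set_ext; intros s; unfold symd; tauto.
Qed.

Lemma approx_union {l} m N (P : nat -> set (Seq l)) (F : nat -> set (Seq l)) :
  measure_ok l m -> is_partition N P ->
  (forall k, measurable (F k)) -> (forall k, Approx m N P (F k)) ->
  Approx m N P (fun s => exists k, F k s).
Proof.
  intros Hm HP HF HA.
  set (A' := fun k => proj1_sig (constructive_indefinite_description _ (HA k))).
  assert (HA' : forall k, sigma_gen (GenP N P) (A' k) /\ m (symd (A' k) (F k)) = 0).
  { intros k. unfold A'. destruct (constructive_indefinite_description _ (HA k)); simpl; auto. }
  exists (fun s => exists k, A' k s). split.
  - apply sg_union. intros k; apply HA'.
  - apply (m_null_sub l m Hm _ (fun s => exists k, symd (A' k) (F k) s)).
    + apply symd_meas. apply sg_union. intros k; apply (Gen_meas N P HP), HA'.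
      apply sg_union; auto.
    + apply sg_union. intros k. apply symd_meas; auto. apply (Gen_meas N P HP), HA'.
    + intros s. unfold symd. intros H. apply NNPP. intros H'.
      apply H. split.
      * intros [k Hk]. exists k. apply NNPP. intros Hn. apply H'. exists k. tauto.
      * intros [k Hk]. exists k. apply NNPP. intros Hn. apply H'. exists k. tauto.
    + apply m_null_union; auto.
      * intros k. apply symd_meas; auto. apply (Gen_meas N P HP), HA'.
      * intros k; apply HA'.
Qed.

Lemma approx_inter {l} m N (P : nat -> set (Seq l)) B1 B2 :
  measure_ok l m -> is_partition N P ->
  measurable B1 -> measurable B2 -> Approx m N P B1 -> Approx m N P B2 ->
  Approx m N P (fun s => B1 s /\ B2 s).
Proof.
  intros Hm HP H1 H2 [A1 [G1 N1]] [A2 [G2 N2]].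
  pose proof (Gen_meas N P HP _ G1) as M1. pose proof (Gen_meas N P HP _ G2) as M2.
  exists (fun s => A1 s /\ A2 s). split. apply sg_inter; auto.
  apply (m_null_sub l m Hm _ (fun s => exists k, (fun k => match k with 0%nat => symd A1 B1 | _ => symd A2 B2 end) k s)).
  - apply symd_meas; apply sg_inter; auto.
  - apply sg_union. intros [|k]; apply symd_meas; auto.
  - intros s. unfold symd. intros H. apply NNPP. intros H'. apply H.
    assert (E1 : A1 s <-> B1 s) by (apply NNPP; intros Hn; apply H'; exists 0%nat; auto).
    assert (E2 : A2 s <-> B2 s) by (apply NNPP; intros Hn; apply H'; exists 1%nat; auto).
    tauto.
  - apply m_null_union; auto. intros [|k]; apply symd_meas; auto. intros [|k]; auto.
Qed.

Lemma generating_part l (m : set (Seq l) -> R) N (P : nat -> set (Seq l)) O :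
  measure_ok l m -> is_partition N P ->
  measurable O -> m O = 0 -> invariant O ->
  (forall k, (k <= S N)%nat ->
     (exists a, (a <= l)%nat /\ forall s, Ptilde N P O k s -> cyl [a] s) \/
     (invariant (Ptilde N P O k) /\ m (Ptilde N P O k) = 0)) ->
  generating m N P.
Proof.
  intros Hm HP HO HO0 HOi Hi.
  set (Q := Ptilde N P O).
  assert (HQm : forall k, measurable (Q k)) by (apply Ptilde_meas; auto).
  set (ZF := fun k => match k with 0%nat => O | S k =>
           fun s => (k <= S N)%nat /\ invariant (Q k) /\ m (Q k) = 0 /\ Q k s end).
  set (Z := fun s => exists k, ZF k s).
  assert (HZF : forall k, measurable (ZF k) /\ m (ZF k) = 0).
  { intros [|k]; simpl; auto.
    destruct (classic ((k <= S N)%nat /\ invariant (Q k) /\ m (Q k) = 0)) as [[H1 [H2 H3]]|H].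
    - replace (fun s => (k <= S N)%nat /\ invariant (Q k) /\ m (Q k) = 0 /\ Q k s) with (Q k)
        by (apply set_ext; intros s; tauto). auto.
    - replace (fun s => (k <= S N)%nat /\ invariant (Q k) /\ m (Q k) = 0 /\ Q k s) with (fun _ : Seq l => False)
        by (apply set_ext; intros s; tauto). split. apply sg_empty. apply m_empty; auto. }
  assert (HZm : measurable Z) by (apply sg_union; intros k; apply HZF).
  assert (HZ0 : m Z = 0) by (apply m_null_union; auto; intros k; apply HZF).
  assert (HZi : invariant Z).
  { intros s. unfold Z, ZF. split.
    - intros [[|k] H].
      + exists 0%nat. apply HOi; auto.
      + exists (S k). destruct H as [H1 [H2 [H3 H4]]]. refine (conj H1 (conj H2 (conj H3 _))). apply (proj1 (H2 s)); auto.
    - intros [[|k] H].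
      + exists 0%nat. apply HOi; auto.
      + exists (S k). destruct H as [H1 [H2 [H3 H4]]]. refine (conj H1 (conj H2 (conj H3 _))). apply (proj2 (H2 s)); auto. }
  assert (Kinc : forall t a, ~ Z t ->
     ((exists k, (k <= N)%nat /\ (forall t', Q k t' -> letter t' 0 = a) /\ P k t) <-> cyl [a] t)).
  { intros t a HZt.
    assert (HOt : ~ O t) by (intros H; apply HZt; exists 0%nat; auto).
    destruct (proj2 (proj2 HP) t) as [k [Hk HPk]].
    assert (HQk : Q k t) by (apply Ptilde_le; auto).
    destruct (Hi k ltac:(lia)) as [[b [Hb Hsub]]|[Hinv H0]].
    2:{ exfalso. apply HZt. exists (S k). refine (conj _ (conj Hinv (conj H0 HQk))); lia. }
    split.
    - intros [k' [Hk' [Hc HPk']]]. apply (proj2 (cyl1 _ _)). apply Hc.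
      destruct (Nat.eq_dec k k') as [<-|Hne]; auto.
      exfalso. apply ((proj1 (proj2 HP)) k k' Hk Hk' Hne t HPk HPk').
    - intros Ha. apply (proj1 (cyl1 _ _)) in Ha. exists k. split; [auto|split; [|auto]].
      intros t' Ht'. rewrite <- Ha. apply Hsub in Ht'. apply (proj1 (cyl1 _ _)) in Ht'.
      pose proof (Hsub t HQk) as E. apply (proj1 (cyl1 _ _)) in E. congruence. }
  assert (Hletter : forall j a, Approx m N P (preim j (cyl [a]))).
  { intros j a.
    exists (fun s => exists k, (fun k s => (k <= N)%nat /\ (forall t', Q k t' -> letter t' 0 = a)
                                   /\ P k (shiftn j s)) k s).
    split.
    - apply sg_union. intros k.
      destruct (classic ((k <= N)%nat /\ (forall t', Q k t' -> letter t' 0 = a))) as [[H1 H2]|H].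
      + apply sg_ext with (preim j (P k)). apply sg_gen. exists j, k; auto.
        intros s; unfold preim; tauto.
      + apply sg_ext with (fun _ => False). apply sg_empty. intros s; tauto.
    - apply (m_null_sub l m Hm _ Z); auto.
      + apply symd_meas. apply (Gen_meas N P HP). apply sg_union. intros k.
        destruct (classic ((k <= N)%nat /\ (forall t', Q k t' -> letter t' 0 = a))) as [[H1 H2]|H].
        * apply sg_ext with (preim j (P k)). apply sg_gen. exists j, k; auto.
          intros s; unfold preim; tauto.
        * apply sg_ext with (fun _ => False). apply sg_empty. intros s; tauto.
        * apply preim_meas. apply sg_gen. exists [a]; auto.
      + intros s Hs. apply NNPP. intros HZs. apply Hs.
        rewrite <- (inv_shiftn Z HZi j s) in HZs.
        rewrite <- (Kinc _ a HZs). unfold preim. tauto. }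
  assert (Hcyl : forall w j, Approx m N P (preim j (@cyl l w))).
  { intros w; induction w as [|a w IH]; intros j.
    - replace (preim j (@cyl l [])) with (fun _ : Seq l => True). apply approx_full; auto.
      apply set_ext; intros s; split; auto. intros _ i Hj; simpl in Hj; lia.
    - replace (preim j (cyl (a :: w))) with (fun s => preim j (@cyl l [a]) s /\ preim (S j) (cyl w) s).
      + apply approx_inter; auto; apply preim_meas; apply sg_gen; eexists; eauto.
      + apply set_ext; intros s; unfold preim, cyl, letter, shiftn; simpl; split.
        * intros [H1 H2] [|i] Hj; simpl. apply (H1 0%nat); lia.
          specialize (H2 i ltac:(lia)). rewrite <- H2. do 2 f_equal. lia.
        * intros H. split.
          -- intros [|i] Hj; simpl; [apply (H 0%nat); lia | lia].
          -- intros i Hj. rewrite <- (H (S i)) by lia. do 2 f_equal. lia. }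
  intros B HB. induction HB.
  - destruct H as [w ->]. apply (Hcyl w 0%nat).
  - apply approx_full; auto.
  - apply approx_compl; auto.
  - apply approx_union; auto.
Qed.

Lemma pcyl_meas {l} (M : nat -> set (Seq l)) idx t :
  (forall j, (j < t)%nat -> measurable (M (idx j))) -> measurable (pcyl M idx t).
Proof.
  induction t; intros H.
  - apply sg_ext with (fun _ => True). apply sg_full. intros s; split; auto. intros _ j Hj; lia.
  - apply sg_ext with (fun s => pcyl M idx t s /\ preim t (M (idx t)) s).
    + apply sg_inter. apply IHt; intros; apply H; lia. apply preim_meas, H; lia.
    + intros s; unfold pcyl, preim; split.
      * intros [H1 H2] j Hj. destruct (Nat.eq_dec j t) as [->|]; [auto|]. apply H1; lia.
      * intros H1; split; [intros j Hj; apply H1; lia | apply H1; lia].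
Qed.

Lemma nth_mkw (a : nat -> nat) t i : (i < t)%nat -> nth i (map a (seq 0 t)) 0%nat = a i.
Proof.
  intros H. rewrite nth_indep with (d' := a 0%nat) by (rewrite length_map, length_seq; auto).
  rewrite map_nth, seq_nth; auto.
Qed.

Lemma cyl_mkw {l} (a : nat -> nat) t (s : Seq l) :
  cyl (map a (seq 0 t)) s <-> forall i, (i < t)%nat -> letter s i = a i.
Proof.
  unfold cyl. rewrite length_map, length_seq. split; intros H i Hi.
  - rewrite <- (nth_mkw a t i Hi). auto.
  - rewrite nth_mkw; auto.
Qed.

Lemma Forall_mkw l (a : nat -> nat) t :
  (forall i, (i < t)%nat -> (a i <= l)%nat) -> Forall (fun x => (x <= l)%nat) (map a (seq 0 t)).
Proof.
  intros H. apply Forall_forall. intros x Hx. apply in_map_iff in Hx.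
  destruct Hx as [i [<- Hi]]. apply in_seq in Hi. apply H; lia.
Qed.

Lemma ratio A B x y pb w : A * pb = w * x -> B * pb = w * y -> 0 < B -> 0 < pb -> A / B = x / y.
Proof.
  intros H1 H2 HB Hp.
  assert (Hy : y <> 0) by (intro; subst; nra).
  assert (E : A * y = x * B).
  { apply (Rmult_eq_reg_r pb); [|lra]. replace (A * y * pb) with (y * (A * pb)) by ring. rewrite H1. replace (x * B * pb) with (x * (B * pb)) by ring. rewrite H2. ring. }
  assert (EA : A = x * B / y) by (rewrite <- E; field; auto).
  rewrite EA. field. split; lra.
Qed.

Lemma markov_part l q p (m : set (Seq l) -> R) N (P : nat -> set (Seq l)) O :
  measure_ok l m -> weight_ok l q p m -> (forall a, (a <= l)%nat -> 0 < p a) ->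
  is_partition N P ->
  measurable O -> m O = 0 -> invariant O ->
  (forall k, (k <= S N)%nat ->
     (exists a, (a <= l)%nat /\ forall s, Ptilde N P O k s -> cyl [a] s) \/
     (invariant (Ptilde N P O k) /\ m (Ptilde N P O k) = 0)) ->
  (forall k1 k2, (k1 <= S N)%nat -> (k2 <= S N)%nat ->
     (exists a, (a <= l)%nat /\ forall s,
        (Ptilde N P O k1 s /\ Ptilde N P O k2 (shift s)) <->
        (cyl [a] s /\ Ptilde N P O k2 (shift s))) \/
     m (fun s => Ptilde N P O k1 s /\ Ptilde N P O k2 (shift s)) = 0) ->
  markov_property m N P.
Proof.
  intros Hm Hw Hp HP HO HO0 HOi Hi Hii.
  set (Q := Ptilde N P O) in *.
  assert (HQm : forall k, measurable (Q k)) by (apply Ptilde_meas; auto).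
  intros n idx Hn Hidx Hpos. destruct n as [|n]; [lia|].
  replace (S n - 1)%nat with n by lia.
  assert (HnotO : forall j s, ~ O s -> ~ O (shiftn j s)).
  { intros j s H H'. apply H. apply (inv_shiftn O HOi j s); auto. }
  assert (EP : forall t, (t <= S (S n))%nat -> m (pcyl P idx t) = m (pcyl Q idx t)).
  { intros t Ht. apply (m_agree l m Hm O); auto.
    - apply pcyl_meas. intros j Hj. apply (proj1 HP). apply Hidx; lia.
    - apply pcyl_meas. intros j Hj. apply HQm.
    - intros s Hs. unfold pcyl. split; intros H j Hj.
      + assert (Hj' : (idx j <= N)%nat) by (apply Hidx; lia).
        apply (proj2 (Ptilde_le N P O _ _ Hj')). split; [apply H; auto | apply HnotO; auto].
      + assert (Hj' : (idx j <= N)%nat) by (apply Hidx; lia).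
        apply (proj1 (proj1 (Ptilde_le N P O _ _ Hj') (H j Hj))). }
  assert (HPm : forall j, (j <= S n)%nat -> measurable (P (idx j))).
  { intros j Hj. apply (proj1 HP). apply Hidx; lia. }
  assert (E3 : m (fun s => P (idx n) s /\ P (idx (S n)) (shift s)) =
               m (fun s => Q (idx n) s /\ Q (idx (S n)) (shift s))).
  { apply (m_agree l m Hm O); auto.
    - apply sg_inter. apply HPm; lia. change (measurable (preim 1 (P (idx (S n))))).
      apply preim_meas, HPm; lia.
    - apply sg_inter. apply HQm. change (measurable (preim 1 (Q (idx (S n))))).
      apply preim_meas, HQm.
    - intros s Hs. unfold Q.
      assert (I1 : (idx n <= N)%nat) by (apply Hidx; lia).
      assert (I2 : (idx (S n) <= N)%nat) by (apply Hidx; lia).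
      rewrite (Ptilde_le N P O _ _ I1), (Ptilde_le N P O _ _ I2).
      assert (~ O (shift s)) by (apply (HnotO 1%nat s Hs)). tauto. }
  assert (E4 : m (P (idx n)) = m (Q (idx n))).
  { apply (m_agree l m Hm O); [auto|auto|apply HPm; lia|apply HQm|].
    intros s Hs. unfold Q. assert (I1 : (idx n <= N)%nat) by (apply Hidx; lia).
    rewrite (Ptilde_le N P O _ _ I1). tauto. }
  rewrite E3, E4, !EP by lia. rewrite EP in Hpos by lia. clear E3 E4 EP.
  assert (Hidx' : forall j, (j <= S n)%nat -> (idx j <= S N)%nat) by (intros j Hj; specialize (Hidx j Hj); lia).
  assert (Hpm : measurable (pcyl Q idx (S n))) by (apply pcyl_meas; intros; apply HQm).
  assert (Hcontra : forall Y, measurable Y -> (forall s, pcyl Q idx (S n) s -> Y s) -> m Y = 0 -> False).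
  { intros Y HY Hs HY0. assert (m (pcyl Q idx (S n)) <= m Y) by (apply m_mono; auto). lra. }
  assert (Ha : forall j, exists a, (j <= n)%nat -> ((a <= l)%nat /\ forall s, Q (idx j) s -> letter s 0 = a)).
  { intros j. destruct (le_lt_dec j n) as [Hj|Hj].
    - destruct (Hi (idx j) (Hidx' j ltac:(lia))) as [[a [Ha Hs]] | [Hinv H0]].
      + exists a; intros _; split; auto; intros s Hs'; apply (proj1 (cyl1 _ _)), Hs; auto.
      + exfalso. apply (Hcontra (Q (idx j))); auto. intros s Hs.
        apply (inv_shiftn _ Hinv j s). apply Hs; lia.
    - exists 0%nat; intros; lia. }
  set (a := fun j => proj1_sig (constructive_indefinite_description _ (Ha j))).
  assert (Ha' : forall j, (j <= n)%nat -> (a j <= l)%nat /\ forall s, Q (idx j) s -> letter s 0 = a j).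
  { intros j. unfold a. destruct (constructive_indefinite_description _ (Ha j)); simpl; auto. }
  assert (Hlet : forall s j, (j <= n)%nat -> Q (idx j) (shiftn j s) -> letter s j = a j).
  { intros s j Hj H. apply (Ha' j Hj) in H. unfold letter, shiftn in H |- *.
    rewrite Nat.add_0_r in H. auto. }
  assert (Hpc : forall s, pcyl Q idx (S n) s -> forall i, (i < S n)%nat -> letter s i = a i).
  { intros s Hs i Hi'. apply Hlet. lia. apply Hs; auto. }
  assert (Hall : forall t, (t < S n)%nat -> (a t <= l)%nat) by (intros; apply Ha'; lia).
  assert (Hpair : forall j, (j < n)%nat -> forall s, letter s 0 = a j -> Q (idx (S j)) (shift s) -> Q (idx j) s).
  { intros j Hj s H1 H2.
    destruct (Hii (idx j) (idx (S j)) (Hidx' j ltac:(lia)) (Hidx' (S j) ltac:(lia))) as [[a0 [Ha0 Heq]] | Hnull].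
    - destruct (Nat.eq_dec a0 (a j)) as [->|Hne].
      + apply (proj2 (Heq s)). split; auto. apply (proj2 (cyl1 _ _)); auto.
      + exfalso. apply (Hcontra (fun _ => False)). apply sg_empty. 2: apply m_empty; auto.
        intros s' Hs'. set (x := shiftn j s').
        assert (Hx : Q (idx j) x /\ Q (idx (S j)) (shift x)).
        { split. apply Hs'; lia. unfold x. rewrite shift_shiftn. apply Hs'; lia. }
        pose proof (proj1 (proj1 (Heq x) Hx)) as Hc. apply (proj1 (cyl1 _ _)) in Hc.
        pose proof (proj2 (Ha' j ltac:(lia)) x (proj1 Hx)). congruence.
    - exfalso.
      set (X := fun s => Q (idx j) s /\ Q (idx (S j)) (shift s)).
      assert (HXm : measurable X).
      { apply sg_inter. apply HQm. change (measurable (preim 1 (Q (idx (S j))))). apply preim_meas, HQm. }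
      set (u := map a (seq 0 (S j))).
      assert (Hcu : measurable (@cyl l u)) by (apply sg_gen; exists u; auto).
      apply (Hcontra (fun s => cyl u s /\ X (shiftn j s))).
      + apply sg_inter; auto. apply (preim_meas j X HXm).
      + intros s0 Hs0. split.
        * apply cyl_mkw. intros i Hi'. apply Hpc; auto. lia.
        * split. apply Hs0; lia. rewrite shift_shiftn. apply Hs0; lia.
      + pose proof (KEY l q p m Hm Hw u j (a j) (Forall_mkw l a (S j) ltac:(intros; apply Hall; lia))
           ltac:(unfold u; rewrite length_map, length_seq; auto) (nth_mkw a (S j) j ltac:(lia)) X HXm) as K.
        assert (Z : m (fun s => cyl [a j] s /\ X s) = 0).
        { apply (m_null_sub l m Hm _ X); auto. apply sg_inter; auto. apply sg_gen; eexists; eauto.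
          intros s1 [_ ?]; auto. }
        rewrite Z, Rmult_0_r in K. apply Rmult_integral in K. destruct K as [K|K]; auto.
        specialize (Hp (a j) (Hall j ltac:(lia))). lra. }
  assert (BACK : forall s, (forall i, (i < S n)%nat -> letter s i = a i) -> Q (idx n) (shiftn n s) ->
            forall j, (j <= n)%nat -> Q (idx j) (shiftn j s)).
  { intros s Hl HQn.
    assert (D : forall d, (d <= n)%nat -> Q (idx (n - d)%nat) (shiftn (n - d)%nat s)).
    { intros d; induction d; intros Hd.
      - rewrite Nat.sub_0_r; auto.
      - apply Hpair. lia.
        + unfold letter, shiftn. rewrite Nat.add_0_r. apply Hl. lia.
        + rewrite shift_shiftn. replace (S (n - S d))%nat with (n - d)%nat by lia. apply IHd; lia. }
    intros j Hj. replace j with (n - (n - j))%nat by lia. apply D; lia. }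
  set (u := map a (seq 0 (S n))).
  set (X := fun s => Q (idx n) s /\ Q (idx (S n)) (shift s)).
  assert (HXm : measurable X).
  { apply sg_inter. apply HQm. change (measurable (preim 1 (Q (idx (S n))))). apply preim_meas, HQm. }
  assert (T1 : pcyl Q idx (S n) = fun s => cyl u s /\ Q (idx n) (shiftn n s)).
  { apply set_ext; intros s; split.
    - intros Hs. split. apply cyl_mkw. apply Hpc; auto. apply Hs; lia.
    - intros [H1 H2] j Hj. pose proof (proj1 (cyl_mkw a (S n) s) H1) as H1'. apply BACK; auto. lia. }
  assert (T2 : pcyl Q idx (S (S n)) = fun s => cyl u s /\ X (shiftn n s)).
  { apply set_ext; intros s; split.
    - intros Hs. split.
      + apply cyl_mkw. intros i Hi'. apply Hlet. lia. apply Hs; lia.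
      + split. apply Hs; lia. rewrite shift_shiftn. apply Hs; lia.
    - intros [H1 [H2 H3]] j Hj. pose proof (proj1 (cyl_mkw a (S n) s) H1) as H1'.
      destruct (Nat.eq_dec j (S n)) as [->|Hne].
      + rewrite <- shift_shiftn. auto.
      + apply BACK; auto. lia. }
  assert (Hu : Forall (fun x => (x <= l)%nat) u) by (apply Forall_mkw; auto).
  assert (Hul : length u = S n) by (unfold u; rewrite length_map, length_seq; auto).
  assert (Hun : nth n u 0%nat = a n) by (apply nth_mkw; lia).
  pose proof (KEY l q p m Hm Hw u n (a n) Hu Hul Hun (Q (idx n)) (HQm _)) as K1.
  pose proof (KEY l q p m Hm Hw u n (a n) Hu Hul Hun X HXm) as K2.
  replace (fun s => cyl [a n] s /\ Q (idx n) s) with (Q (idx n)) in K1.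
  2:{ apply set_ext; intros s; split; [|tauto]. intros H; split; auto.
      apply (proj2 (cyl1 _ _)). apply (Ha' n); auto. }
  replace (fun s => cyl [a n] s /\ X s) with X in K2.
  2:{ apply set_ext; intros s; split; [|tauto]. intros H; split; auto.
      apply (proj2 (cyl1 _ _)). apply (Ha' n); auto. apply H. }
  rewrite <- T1 in K1. rewrite <- T2 in K2.
  apply (ratio _ _ _ _ (p (a n)) (m (cyl u))); auto.
Qed.

Theorem corollary3 (l : nat) (q : nat -> nat -> R) (p : nat -> R)
    (m : set (Seq l) -> R) (N : nat) (P : nat -> set (Seq l)) (O : set (Seq l)) :
  stochastic l q ->
  stationary_pos l q p ->
  markov_measure l q p m ->
  is_partition N P ->
  measurable O -> m O = 0 -> invariant O ->
  (* (i) *)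
  (forall k, (k <= S N)%nat ->
     (exists a, (a <= l)%nat /\ forall s, Ptilde N P O k s -> cyl [a] s) \/
     (invariant (Ptilde N P O k) /\ m (Ptilde N P O k) = 0)) ->
  (* (ii) *)
  (forall k1 k2, (k1 <= S N)%nat -> (k2 <= S N)%nat ->
     (exists a, (a <= l)%nat /\ forall s,
        (Ptilde N P O k1 s /\ Ptilde N P O k2 (shift s)) <->
        (cyl [a] s /\ Ptilde N P O k2 (shift s))) \/
     m (fun s => Ptilde N P O k1 s /\ Ptilde N P O k2 (shift s)) = 0) ->
  generating m N P /\ markov_property m N P.
Proof.
  intros Hq Hp [Hpos [Hadd Hw]] HP HO HO0 HOi Hi Hii.
  assert (Hm : measure_ok l m) by (split; auto).
  split.
  - apply (generating_part l m N P O); auto.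
  - apply (markov_part l q p m N P O); auto. apply Hp.
Qed.
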